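(* Let $n,d\in\mathbb{N}$ and let $k\geq 3$ be an integer such that $m=nd/k\in\mathbb{N}$ and $\binom{m}{2}<\binom{n}{k}$. Then \[\mathbb{P}_{\pi_{\mathcal{B}}}\big(\mathcal{B}^*(n,d,k)\big)\geq 1-\binom{m}{2}\binom{n}{k}^{-1}.\] Consequently, if $\mathcal{A}$ is an algorithm sampling from $\mathcal{B}(n,d,k)$ with output distribution $\sigma_{\mathcal{B}}$ satisfying $d_{TV}(\sigma_{\mathcal{B}},\pi_{\mathcal{B}})\leq\varepsilon$ for some $\varepsilon\in(0,1)$, and $\binom{m}{2}\leq c_0\binom{n}{k}$ for some $c_0\in(0,1-\varepsilon)$, then the output distribution $\sigma_{\mathcal{H}}$ of \textsc{HypergraphSampling}$((d,\dots,d),k,\mathcal{A})$ satisfies $d_{TV}(\sigma_{\mathcal{H}},\pi_{\mathcal{H}})\leq \frac{3\varepsilon}{2(1-c_0)}$, and its expected runtime is at most $(1-c_0-\varepsilon)^{-1}(\tau+\rho)$, where $\tau$ is the (expected) runtime of $\mathcal{A}$ and $\rho$ is the runtime of the H-simplicity test.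
   Context: $\mathcal{B}(n,d,k)$ denotes the set of simple bipartite graphs with fixed bipartition $X=\{x_1,\dots,x_n\}$, $Y=\{y_1,\dots,y_m\}$ in which every node of $X$ has degree $d$ and every node of $Y$ has degree $k$. $B$ is H-simple if distinct nodes of $Y$ have distinct neighbourhoods; $\mathcal{B}^*(n,d,k)$ is the set of H-simple elements of $\mathcal{B}(n,d,k)$, and $\pi_{\mathcal{B}}$ is the uniform distribution on $\mathcal{B}(n,d,k)$. For an H-simple $B$, $\varphi(B)$ is the simple $k$-uniform hypergraph on $X$ with edge set $\{\mathcal{N}_B(y):y\in Y\}$; $\pi_{\mathcal{H}}$ is the uniform distribution on the set of simple $k$-uniform $d$-regular hypergraphs on $X$. \textsc{HypergraphSampling}$(\boldsymbol{d},k,\mathcal{A})$ repeatedly samples $B$ using $\mathcal{A}$ until $B$ is H-simple, then outputs $\varphi(B)$; the H-simplicity test also constructs $\varphi(B)$. $d_{TV}$ is total variation distance. *)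

(* Defs.v *)
From HB Require Import structures.
From mathcomp Require Import all_boot all_order all_algebra.
From mathcomp Require Import all_classical all_reals all_analysis.
Import Order.TTheory GRing.Theory Num.Theory.
Local Open Scope ring_scope.

(* A bipartite graph with fixed bipartition X = 'I_n, Y = 'I_m, given by
   its edge set (x, y). *)
Definition bigraph (n m : nat) := {set 'I_n * 'I_m}.

Definition nbhdY {n m} (B : bigraph n m) (y : 'I_m) : {set 'I_n} :=
  [set x | (x, y) \in B].
Definition nbhdX {n m} (B : bigraph n m) (x : 'I_n) : {set 'I_m} :=
  [set y | (x, y) \in B].

Definition biregular {n m} (d k : nat) (B : bigraph n m) : bool :=
  [forall x, #|nbhdX B x| == d] && [forall y, #|nbhdY B y| == k].

Definition Bset n m (d k : nat) : {set bigraph n m} :=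
  [set B | biregular d k B].

Definition H_simple {n m} (B : bigraph n m) : bool := injectiveb (nbhdY B).

Definition Bstar n m (d k : nat) : {set bigraph n m} :=
  [set B in Bset n m d k | H_simple B].

(* hypergraphs on X = 'I_n, given by their (simple) edge set *)
Definition hypergraph (n : nat) := {set {set 'I_n}}.

Definition phi {n m} (B : bigraph n m) : hypergraph n :=
  [set nbhdY B y | y : 'I_m].

Definition unif_reg {n} (d k : nat) (H : hypergraph n) : bool :=
  [forall e in H, #|e| == k] && [forall x, #|[set e in H | x \in e]| == d].

Definition Hset n (d k : nat) : {set hypergraph n} := [set H | unif_reg d k H].

Definition is_distr {R : realType} {T : finType} (mu : T -> R) : Prop :=
  (forall x, 0 <= mu x) /\ \sum_x mu x = 1.

Definition prob {R : realType} {T : finType} (mu : T -> R) (A : {set T}) : R :=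
  \sum_(x in A) mu x.

Definition unif (R : realType) {T : finType} (A : {set T}) (x : T) : R :=
  if x \in A then #|A|%:R^-1 else 0.

Definition dTV {R : realType} {T : finType} (mu nu : T -> R) : R :=
  2^-1 * \sum_x `|mu x - nu x|.

Definition piB (R : realType) n m (d k : nat) : bigraph n m -> R :=
  unif R (Bset n m d k).
Definition piH (R : realType) n (d k : nat) : hypergraph n -> R :=
  unif R (Hset n d k).

(* Output distribution of HypergraphSampling((d,...,d),k,A) when A has
   output distribution sigma: the law of phi(B) where B ~ sigma conditioned
   on B being H-simple (rejection sampling). *)
Definition hs_output {R : realType} {n m} (d k : nat) (sigma : bigraph n m -> R)
  (H : hypergraph n) : R :=
  (\sum_(B in Bstar n m d k | phi B == H) sigma B) / prob sigma (Bstar n m d k).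

(* Expected runtime of HypergraphSampling: each round costs tau (expected
   runtime of A) + rho (H-simplicity test + construction of phi(B)), and round
   t+1 is executed iff the first t rounds all failed, which has probability
   (1 - p)^t where p = sigma(B^* ).  Hence
   E[runtime] = sum_{t>=0} (1-p)^t (tau + rho)   (in \bar R, +oo allowed). *)
Definition hs_runtime {R : realType} {n m} (d k : nat) (sigma : bigraph n m -> R)
  (tau rho : R) : \bar R :=
  (\sum_(t <oo) ((tau + rho) * (1 - prob sigma (Bstar n m d k)) ^+ t)%:E)%E.

(* Main.v *)
Require Import Defs.
From HB Require Import structures.
From mathcomp Require Import all_boot all_order all_algebra.
From mathcomp Require Import all_classical all_reals all_analysis.
Import Order.TTheory GRing.Theory Num.Theory.
Local Open Scope ring_scope.
From mathcomp Require Import zify.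
From mathcomp Require Import fintype finset.
From mathcomp Require Import ring lra.
Set Implicit Arguments. Unset Strict Implicit. Unset Printing Implicit Defensive.
Local Open Scope nat_scope.

Lemma nth_index_inj (T T' : finType) (D : {set T}) (E : {set T'}) (e0 : T') :
  #|D| <= #|E| ->
  {in D &, injective (fun x => nth e0 (enum E) (index x (enum D)))} /\
  {in D, forall x, nth e0 (enum E) (index x (enum D)) \in E}.
Proof.
move=> hDE; have hi : forall x, x \in D -> index x (enum D) < size (enum E).
  move=> x xD; rewrite -cardE; apply: leq_trans hDE.
  by rewrite cardE index_mem mem_enum.
split.
  move=> x y xD yD /eqP; rewrite nth_uniq ?hi ?enum_uniq // => /eqP h.
  by rewrite -[x](nth_index x (s := enum D)) ?mem_enum // h nth_index ?mem_enum.
by move=> x xD; rewrite -mem_enum mem_nth ?hi.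
Qed.

Lemma bin_half w : 'C(w, (w./2).-1) <= 'C(w, w./2).
Proof.
case hj: (w./2) => [|j] //=.
have h := mul_bin_left w j.
have hjw : j.+1 <= w - j.
  have : (w./2).*2 <= w by rewrite -[w in _ <= w]odd_double_half leq_addl.
  rewrite hj; lia.
have : j.+1 * 'C(w, j) <= j.+1 * 'C(w, j.+1).
  by rewrite h leq_mul2r hjw orbT.
by rewrite leq_mul2l.
Qed.

Lemma card_sum (T : finType) (A : {set T}) : #|A| = \sum_x (x \in A : nat).
Proof. by rewrite -sum1_card big_mkcond /=; apply: eq_bigr => x _; case: (x \in A). Qed.

Lemma card_uv (T : finType) (A A' : {set T}) (u v : T) : u != v ->
  (forall x, x != u -> x != v -> (x \in A) = (x \in A')) ->
  (u \in A) + (v \in A) = (u \in A') + (v \in A') :> nat -> #|A| = #|A'|.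
Proof.
move=> uv hx huv; have vu : v != u by rewrite eq_sym.
rewrite !card_sum (bigD1 u) //= (bigD1 v) //=.
rewrite [in RHS](bigD1 u) //= [in RHS](bigD1 v) //=.
have -> : \sum_(i | (i != u) && (i != v)) (i \in A) =
          \sum_(i | (i != u) && (i != v)) (i \in A').
  by apply: eq_bigr => x /andP[xu xv]; rewrite hx.
lia.
Qed.

Section Iota.
Variable m : nat.
Definition Dset (W : {set 'I_m}) :=
  [set P : {set 'I_m} | P \subset W & #|P| == (#|W|./2).-1].
Definition Eset (W : {set 'I_m}) :=
  [set Q : {set 'I_m} | Q \subset W & #|Q| == #|W|./2].
Definition iota W P := nth set0 (enum (Eset W)) (index P (enum (Dset W))).
Lemma iotaP W : {in Dset W &, injective (iota W)} /\
  {in Dset W, forall P, iota W P \in Eset W}.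
Proof. apply: nth_index_inj; rewrite !cards_draws; exact: bin_half. Qed.
End Iota.

Section Switch.
Variables (n m d k : nat) (y1 y2 : 'I_m) (S T : {set 'I_n}) (u v : 'I_n).
Hypotheses (y12 : y1 != y2) (uS : u \in S) (uT : u \in T) (vS : v \notin S)
  (vT : v \notin T).

Definition FF (T : {set 'I_n}) :=
  [set B in Bset n m d k | (nbhdY B y1 == S) && (nbhdY B y2 == T)].

Definition swW (B : bigraph n m) :=
  [set y | (y \in nbhdX B u) != (y \in nbhdX B v)] :\ y1 :\ y2.
Definition swC (B : bigraph n m) := nbhdX B u :&: nbhdX B v.
Definition swP (B : bigraph n m) := nbhdX B u :&: swW B.
Definition swQ (B : bigraph n m) := iota (swW B) (swP B).
Definition Nu' B := y1 |: (swC B :|: swQ B).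
Definition Nv' B := y2 |: (swC B :|: (swW B :\: swQ B)).
Definition Psi (B : bigraph n m) : bigraph n m :=
  [set p | if p.1 == u then p.2 \in Nu' B else
           if p.1 == v then p.2 \in Nv' B else p \in B].

Lemma uv : u != v.
Proof. by apply: contraNneq vS => <-. Qed.

Lemma FF_facts B : B \in FF T ->
  [/\ y1 \in nbhdX B u, y2 \in nbhdX B u, y1 \notin nbhdX B v,
      y2 \notin nbhdX B v & #|nbhdX B u| = d /\ #|nbhdX B v| = d].
Proof.
case/setIdP => hb /andP[/eqP h1 /eqP h2].
rewrite inE in hb; case/andP: hb => /forallP hX /forallP hY.
have m1 x y : (y \in nbhdX B x) = (x \in nbhdY B y) by rewrite !inE.
rewrite !m1 h1 h2 uS uT (negPf vS) (negPf vT); split => //.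
by rewrite (eqP (hX u)) (eqP (hX v)).
Qed.

Lemma W_card B : B \in FF T ->
  #|swW B| = (#|swP B|).+1.*2 /\ swP B \subset swW B /\
  #|nbhdX B u| = #|swC B| + #|swP B| + 2.
Proof.
case/FF_facts => a1 a2 a3 a4 [cu cv].
have b1 := a1; have b2 := a2; have b3 := a3; have b4 := a4.
rewrite !inE in b1 b2 b3 b4.
have eP : (nbhdX B u) :\: (nbhdX B v) = y1 |: (y2 |: swP B).
  apply/setP => y; rewrite !inE.
  case: (eqVneq y y1) => [->|ny1]; first by rewrite ?eqxx ?b1 ?b2 ?(negPf b3) ?(negPf b4) ?(negPf y12) /= ?andbF ?orbT.
  case: (eqVneq y y2) => [->|ny2]; first by rewrite ?eqxx ?b1 ?b2 ?(negPf b3) ?(negPf b4) ?(negPf y12) /= ?andbF ?orbT.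
  rewrite /=; by case: ((u, y) \in B); case: ((v, y) \in B).
have eW : swW B = swP B :|: ((nbhdX B v) :\: (nbhdX B u)).
  apply/setP => y; rewrite !inE.
  case: (eqVneq y y1) => [->|ny1]; first by rewrite ?eqxx ?b1 ?b2 ?(negPf b3) ?(negPf b4) ?(negPf y12) /= ?andbF ?orbT.
  case: (eqVneq y y2) => [->|ny2]; first by rewrite ?eqxx ?b1 ?b2 ?(negPf b3) ?(negPf b4) ?(negPf y12) /= ?andbF ?orbT.
  rewrite /=; by case: ((u, y) \in B); case: ((v, y) \in B).
have dPQ : swP B :&: ((nbhdX B v) :\: (nbhdX B u)) = set0.
  apply/setP => y; rewrite !inE; by case: ((u, y) \in B); case: ((v, y) \in B); rewrite ?andbF.
have y1P : y1 \notin y2 |: swP B by rewrite !inE (negPf y12) eqxx /= !andbF.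
have y2P : y2 \notin swP B by rewrite !inE eqxx !andbF.
have hu := cardsID (nbhdX B v) (nbhdX B u).
have hv := cardsID (nbhdX B u) (nbhdX B v).
rewrite eP cardsU1 y1P cardsU1 y2P /= in hu.
have hW := cardsUI (swP B) ((nbhdX B v) :\: (nbhdX B u)).
rewrite -eW dPQ cards0 addn0 in hW.
rewrite setIC in hv.
rewrite /swC; split; last split.
- rewrite hW; move: hu hv cu cv; rewrite /= -addnn.
  move: #|swP B| #|nbhdX B v :\: nbhdX B u| #|nbhdX B u :&: nbhdX B v| #|nbhdX B u| #|nbhdX B v| #|nbhdX B u :\: nbhdX B v|.
  clear; lia.
- by rewrite eW subsetUl.
- move: hu cu; rewrite /=.
  move: #|swP B| #|nbhdX B u :&: nbhdX B v| #|nbhdX B u|.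
  clear; lia.
Qed.

Ltac destr_in := repeat match goal with |- context [?a \in ?A] => case: (a \in A) end.

Lemma Q_facts B : B \in FF T ->
  swQ B \subset swW B /\ #|swQ B| = (#|swP B|).+1 /\ swP B \in Dset (swW B).
Proof.
move=> hB; have [hW [hPW hu]] := W_card hB.
have hD : swP B \in Dset (swW B) by rewrite inE hPW hW doubleK eqxx.
have [_ hE] := iotaP (swW B); have := hE _ hD; rewrite inE => /andP[-> /eqP ->].
by rewrite hW doubleK.
Qed.

Lemma memB (B : bigraph n m) x y : (y \in nbhdX B x) = ((x, y) \in B).
Proof. by rewrite inE. Qed.
Lemma memBY (B : bigraph n m) x y : (x \in nbhdY B y) = ((x, y) \in B).
Proof. by rewrite inE. Qed.

Lemma Psi_mem (B : bigraph n m) x y : ((x, y) \in Psi B) =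
  if x == u then y \in Nu' B else if x == v then y \in Nv' B else (x, y) \in B.
Proof. by rewrite inE. Qed.

Section OneB.
Variable B : bigraph n m.
Hypothesis hB : B \in FF T.

Let b1 : (u, y1) \in B. Proof. by case: (FF_facts hB); rewrite memB. Qed.
Let b2 : (u, y2) \in B. Proof. by case: (FF_facts hB); rewrite !memB. Qed.
Let b3 : (v, y1) \notin B. Proof. by case: (FF_facts hB); rewrite !memB. Qed.
Let b4 : (v, y2) \notin B. Proof. by case: (FF_facts hB); rewrite !memB. Qed.
Let hq y : (y \in swQ B) ==> (y \in swW B).
Proof. by apply/implyP; apply: subsetP; case: (Q_facts hB). Qed.

Ltac kr := rewrite ?eqxx ?b1 ?b2 ?(negPf b3) ?(negPf b4) ?(negPf y12)
   ?[y2 == y1]eq_sym ?(negPf y12) /=.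
Ltac yc y := have := hq y; rewrite !inE;
  case: (eqVneq y y1) => [?|_]; [subst y; kr; destr_in; done|];
  case: (eqVneq y y2) => [?|_]; [subst y; kr; destr_in; done|];
  kr; destr_in; done.

Lemma Wrec : swW B = [set y | (y \in Nu' B) != (y \in Nv' B)] :\ y1 :\ y2.
Proof. apply/setP => y; yc y. Qed.

Lemma Qrec : swQ B = Nu' B :&: swW B.
Proof. apply/setP => y; yc y. Qed.
Lemma Crec : swC B = Nu' B :&: Nv' B.
Proof. apply/setP => y; yc y. Qed.
Lemma Nurec : nbhdX B u = y1 |: (y2 |: (swC B :|: swP B)).
Proof. apply/setP => y; yc y. Qed.
Lemma Nvrec : nbhdX B v = swC B :|: (swW B :\: swP B).
Proof. apply/setP => y; yc y. Qed.

Lemma Nu'_card : #|Nu' B| = d.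
Proof.
have [_ [_ hu]] := W_card hB; have [_ [hQ _]] := Q_facts hB.
have [_ _ _ _ [cu _]] := FF_facts hB.
have h1 : y1 \notin swC B :|: swQ B by have := hq y1; rewrite !inE; kr; destr_in.
have h0 : swC B :&: swQ B = set0 by apply/setP => y; yc y.
have := cardsUI (swC B) (swQ B); rewrite h0 cards0 addn0 => hU.
rewrite /Nu' cardsU1 h1 hU hQ; lia.
Qed.

Lemma Nv'_card : #|Nv' B| = d.
Proof.
have [hW [_ hu]] := W_card hB; have [hQW [hQ _]] := Q_facts hB.
have [_ _ _ _ [cu _]] := FF_facts hB.
have h1 : y2 \notin swC B :|: (swW B :\: swQ B).
  by have := hq y2; rewrite !inE; kr; destr_in.
have h0 : swC B :&: (swW B :\: swQ B) = set0 by apply/setP => y; yc y.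
have := cardsUI (swC B) (swW B :\: swQ B); rewrite h0 cards0 addn0 => hU.
have := cardsID (swQ B) (swW B); rewrite (setIidPr hQW) hQ hW => hD.
rewrite /Nv' cardsU1 h1 hU; move: hD hu cu; rewrite -addnn.
move: #|swC B| #|swP B| #|nbhdX B u| #|swW B :\: swQ B|; clear; lia.
Qed.

Lemma Psi_X x : nbhdX (Psi B) x =
  if x == u then Nu' B else if x == v then Nv' B else nbhdX B x.
Proof.
apply/setP => y; rewrite memB Psi_mem.
by case: (x == u) => //; case: (x == v) => //; rewrite memB.
Qed.

Lemma Psi_Y y : #|nbhdY (Psi B) y| = #|nbhdY B y|.
Proof.
apply: (card_uv uv).
  by move=> x xu xv; rewrite !memBY Psi_mem (negPf xu) (negPf xv).
rewrite !memBY !Psi_mem eqxx eq_sym (negPf uv) eqxx.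
have := hq y; rewrite !inE.
case: (eqVneq y y1) => [?|_]; [subst y; kr; destr_in; done|].
case: (eqVneq y y2) => [?|_]; [subst y; kr; destr_in; done|].
kr; destr_in; done.
Qed.

Lemma Psi_y1 : nbhdY (Psi B) y1 = S.
Proof.
have [_ /andP[/eqP h1 _]] := setIdP hB.
apply/setP => x; rewrite memBY Psi_mem.
case: (eqVneq x u) => [->|xu]; first by rewrite uS !inE eqxx.
case: (eqVneq x v) => [->|xv]; last by rewrite -memBY h1.
rewrite (negPf vS); have := hq y1; rewrite !inE; kr; by destr_in.
Qed.

Lemma Psi_y2 : nbhdY (Psi B) y2 = v |: T :\ u.
Proof.
have [_ /andP[_ /eqP h2]] := setIdP hB.
apply/setP => x; rewrite memBY Psi_mem.
case: (eqVneq x u) => [->|xu].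
  rewrite !inE eqxx (negPf uv) /=; have := hq y2; rewrite !inE; kr; by destr_in.
case: (eqVneq x v) => [->|xv]; first by rewrite !inE !eqxx.
by rewrite -memBY h2 !inE (negPf xv) (negPf xu).
Qed.

Lemma Psi_FF : Psi B \in FF (v |: T :\ u).
Proof.
have [hb _] := setIdP hB; rewrite inE in hb; case/andP: hb => /forallP hX /forallP hY.
apply/setIdP; split; last by rewrite Psi_y1 Psi_y2 !eqxx.
rewrite inE /biregular; apply/andP; split.
  apply/forallP => x; rewrite Psi_X.
  case: (x == u); first by rewrite Nu'_card.
  case: (x == v); first by rewrite Nv'_card.
  exact: hX.
by apply/forallP => y; rewrite Psi_Y; apply: hY.
Qed.
End OneB.

Lemma Psi_inj : {in FF T &, injective Psi}.
Proof.
move=> B1 B2 h1 h2 e.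
have eu : Nu' B1 = Nu' B2.
  apply/setP => y; have := congr1 (fun B : bigraph n m => (u, y) \in B) e.
  by rewrite /= !Psi_mem eqxx.
have ev : Nv' B1 = Nv' B2.
  apply/setP => y; have := congr1 (fun B : bigraph n m => (v, y) \in B) e.
  by rewrite /= !Psi_mem eq_sym (negPf uv) eqxx.
have eW : swW B1 = swW B2 by rewrite (Wrec h1) (Wrec h2) eu ev.
have eQ : swQ B1 = swQ B2 by rewrite (Qrec h1) (Qrec h2) eu eW.
have eC : swC B1 = swC B2 by rewrite (Crec h1) (Crec h2) eu ev.
have eP : swP B1 = swP B2.
  have [_ [_ d1]] := Q_facts h1; have [_ [_ d2]] := Q_facts h2.
  have [hi _] := iotaP (swW B1); apply: hi => //; first by rewrite eW.
  by move: eQ; rewrite /swQ eW.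
have eNu : nbhdX B1 u = nbhdX B2 u by rewrite (Nurec h1) (Nurec h2) eC eP.
have eNv : nbhdX B1 v = nbhdX B2 v by rewrite (Nvrec h1) (Nvrec h2) eC eP eW.
apply/setP => -[x y].
case: (eqVneq x u) => [->|xu]; first by rewrite -!memB eNu.
case: (eqVneq x v) => [->|xv]; first by rewrite -!memB eNv.
have := congr1 (fun B : bigraph n m => (x, y) \in B) e.
by rewrite /= !Psi_mem (negPf xu) (negPf xv).
Qed.

Lemma switch_le : #|FF T| <= #|FF (v |: T :\ u)|.
Proof.
rewrite -(card_in_imset Psi_inj); apply: subset_leq_card.
by apply/subsetP => _ /imsetP[B hB ->]; apply: Psi_FF.
Qed.
End Switch.

Lemma card_fiber (I J : finType) (X : {set I}) (f : I -> J) :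
  #|X| = \sum_j #|[set x in X | f x == j]|.
Proof.
rewrite -sum1_card (partition_big f xpredT) //=; apply: eq_bigr => j _.
by rewrite -sum1_card; apply: eq_bigl => x; rewrite inE.
Qed.

Lemma diag_le n m d k (y1 y2 : 'I_m) (S T : {set 'I_n}) : y1 != y2 ->
  #|T| = #|S| -> #|FF d k y1 y2 S S| <= #|FF d k y1 y2 S T|.
Proof.
move=> y12; move e: #|S :\: T| => j; elim: j T e => [|j IH] T e hT.
  have : S == T.
    rewrite eqEcard hT leqnn andbT -setD_eq0; apply/eqP.
    by apply/eqP; rewrite -cards_eq0 e.
  by move/eqP <-.
have [u uST] : exists u, u \in S :\: T.
  by apply/set0Pn; rewrite -card_gt0 e.
have eTS : #|T :\: S| = j.+1.
  have := cardsID S T; have := cardsID T S; rewrite setIC; lia.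
have [v vTS] : exists v, v \in T :\: S.
  by apply/set0Pn; rewrite -card_gt0 eTS.
move: uST vTS; rewrite !inE => /andP[uT uS] /andP[vS vT].
set T0 := u |: T :\ v.
have uT0 : u \in T0 by rewrite !inE eqxx.
have vT0 : v \notin T0.
  by rewrite !inE eqxx /= orbF; apply: contraNneq vS => ->.
have eT : v |: T0 :\ u = T.
  apply/setP => x; rewrite !inE.
  case: (eqVneq x v) => [->|xv] //=.
  case: (eqVneq x u) => [->|xu] //=; by rewrite (negPf uT).
have hT0 : #|T0| = #|S|.
  rewrite cardsU1 !inE (negPf uT) andbF /=.
  have := cardsD1 v T; rewrite vT -hT /=; lia.
have e0 : #|S :\: T0| = j.
  have -> : S :\: T0 = (S :\: T) :\ u.
    apply/setP => x; rewrite !inE.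
    case: (eqVneq x u) => [->|xu] //=.
    by case: (eqVneq x v) => [->|xv] /=; rewrite ?(negPf vS) ?andbF.
  have := cardsD1 u (S :\: T); rewrite e !inE uS (negPf uT) /=; lia.
apply: leq_trans (IH _ e0 hT0) _.
by rewrite -[X in _ <= #|FF _ _ _ _ _ X|]eT; apply: switch_le.
Qed.

Definition A12 n m d k (y1 y2 : 'I_m) :=
  [set B in Bset n m d k | nbhdY B y1 == nbhdY B y2].

Lemma sum_in_le (I : finType) (D : {pred I}) (f : I -> nat) :
  \sum_(i in D) f i <= \sum_i f i.
Proof.
rewrite [X in _ <= X](bigID (mem D)) /=; exact: leq_addr.
Qed.

Lemma pair_bound n m d k (y1 y2 : 'I_m) : y1 != y2 ->
  #|A12 n d k y1 y2| * 'C(n, k) <= #|Bset n m d k|.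
Proof.
move=> y12.
rewrite (card_fiber (Bset n m d k) (fun B => nbhdY B y1)).
rewrite (card_fiber (A12 n d k y1 y2) (fun B => nbhdY B y1)) big_distrl /=.
apply: leq_sum => S _.
have e1 : [set x in A12 n d k y1 y2 | nbhdY x y1 == S] = FF d k y1 y2 S S.
  apply/setP => B; rewrite !inE.
  case: (eqVneq (nbhdY B y1) S) => [->|]; first by rewrite andbT eq_sym.
  by rewrite !andbF.
have e2 : #|[set x in Bset n m d k | nbhdY x y1 == S]| =
          \sum_T #|FF d k y1 y2 S T|.
  rewrite (card_fiber _ (fun B => nbhdY B y2)); apply: eq_bigr => T _.
  by apply: eq_card => B; rewrite !inE andbA.
rewrite e1 e2.
case: (eqVneq #|S| k) => hS; last first.
  suff -> : #|FF d k y1 y2 S S| = 0 by [].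
  apply/eqP; rewrite cards_eq0; apply/eqP; apply/setP => B; rewrite !inE.
  apply/negP => /andP[/andP[_ /forallP hY] /andP[/eqP h1 _]].
  by move: (hY y1); rewrite h1 (negPf hS).
rewrite -[in X in _ * X](card_ord n) -card_draws mulnC -sum_nat_const.
apply: leq_trans (sum_in_le _ _); apply: leq_sum => T.
by rewrite inE => /eqP hT; apply: diag_le => //; rewrite hT hS.
Qed.

Lemma card_bigcup_le (I T : finType) (P : pred I) (F : I -> {set T}) :
  #|\bigcup_(i | P i) F i| <= \sum_(i | P i) #|F i|.
Proof.
elim/big_rec2: _ => [|i U s Pi hU]; first by rewrite cards0.
by apply: leq_trans (leq_add (leqnn _) hU); rewrite cardsU leq_subr.
Qed.

Lemma card_lt m (j : 'I_m) : \sum_(i < m | i < j) 1 = j.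
Proof. by rewrite (big_ord_narrow (ltnW (ltn_ord j))) sum1_card card_ord. Qed.

Lemma part1_nat n m d k :
  #|Bset n m d k :\: Bstar n m d k| * 'C(n, k) <= 'C(m, 2) * #|Bset n m d k|.
Proof.
have sub : Bset n m d k :\: Bstar n m d k \subset
    \bigcup_(j : 'I_m) \bigcup_(i : 'I_m | i < j) A12 n d k i j.
  apply/subsetP => B; rewrite !inE => /andP[hns hb]; rewrite hb /= in hns.
  case/injectivePn: hns => i [j ij eij].
  apply/bigcupP.
  case: (ltngtP i j) => [lij|lji|eq]; last by move: ij; rewrite (val_inj eq) eqxx.
    by exists j => //; apply/bigcupP; exists i => //; rewrite !inE hb eij eqxx.
  by exists i => //; apply/bigcupP; exists j => //; rewrite !inE hb eij eqxx.
apply: leq_trans (leq_mul (subset_leq_card sub) (leqnn _)) _.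
apply: leq_trans (leq_mul (card_bigcup_le _ _) (leqnn _)) _.
rewrite big_distrl /=.
apply: (@leq_trans (\sum_(j < m) (\sum_(i < m | i < j) #|A12 n d k i j|) * 'C(n,k))).
  by apply: leq_sum => j _; rewrite leq_mul2r card_bigcup_le orbT.
under eq_bigr do rewrite big_distrl /=.
have h : forall j : 'I_m, \sum_(i < m | i < j) #|A12 n d k i j| * 'C(n, k)
   <= j * #|Bset n m d k|.
  move=> j; rewrite -[X in X * _](card_lt j) big_distrl /=.
  apply: leq_sum => i ij; rewrite mul1n; apply: pair_bound.
  by rewrite neq_ltn ij.
apply: (@leq_trans (\sum_(j < m) j * #|Bset n m d k|)).
  by apply: leq_sum => j _; apply: h.
by rewrite -big_distrl /= -(big_mkord xpredT (fun j => j)) bin2_sum.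
Qed.

Lemma modinj a i j n : i < n -> j < n -> (a + i) %% n = (a + j) %% n -> i = j.
Proof.
move=> hi hj /eqP; rewrite eqn_modDl !modn_small // => /eqP //.
Qed.
Lemma divinj x j j' n k : 0 < k -> k <= n -> (x + j * n) %/ k = (x + j' * n) %/ k -> j = j'.
Proof.
move=> k0 kn.
wlog lt : j j' / j < j'.
  move=> W e; case: (ltngtP j j') => [h|h|//]; first exact: W.
  by apply/esym/W.
move=> e; exfalso.
have h1 : x + j * n + k <= x + j' * n.
  have : j.+1 * n <= j' * n by rewrite leq_mul2r lt orbT.
  rewrite mulSn; lia.
have := leq_div2r k h1; rewrite -e.
have -> : x + j * n + k = x + j * n + 1 * k by rewrite mul1n.
rewrite divnDMl //; lia.
Qed.

Section Exist.
Variables (n m d k : nat) (k0 : 0 < k) (kn : k <= n) (hm : k * m = n * d).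
Let n0 : 0 < n. Proof. exact: leq_trans k0 kn. Qed.

Definition B0 : bigraph n m :=
  [set p : 'I_n * 'I_m | [exists t : 'I_(n * d), (t %% n == p.1) && (t %/ k == p.2)]].

Lemma B0_Y (y : 'I_m) : #|nbhdY B0 y| = k.
Proof.
pose f (i : 'I_k) : 'I_n := Ordinal (ltn_pmod (y * k + i) n0).
have finj : injective f.
  move=> i j /(congr1 val) /= /modinj h; apply: val_inj; apply: h.
    exact: leq_trans (ltn_ord i) kn.
  exact: leq_trans (ltn_ord j) kn.
suff -> : nbhdY B0 y = f @: [set: 'I_k] by rewrite card_imset // cardsT card_ord.
apply/setP => x; rewrite !inE; apply/existsP/imsetP.
  case=> t /andP[/eqP tx /eqP ty].
  exists (Ordinal (ltn_pmod t k0)) => //; apply: val_inj => /=.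
  by rewrite -tx -ty -divn_eq.
case=> i _ ->.
have ht : y * k + i < n * d.
  rewrite -hm; apply: leq_trans (_ : y.+1 * k <= _).
    by rewrite mulSn; move: (ltn_ord i); lia.
  by rewrite mulnC leq_mul2l ltn_ord orbT.
exists (Ordinal ht); rewrite /= eqxx /= divnMDl // divn_small ?addn0 //.
Qed.

Lemma B0_X (x : 'I_n) : #|nbhdX B0 x| = d.
Proof.
have hlt (j : 'I_d) : (x + j * n) %/ k < m.
  rewrite ltn_divLR // [m * k]mulnC hm.
  apply: leq_trans (_ : j.+1 * n <= _).
    by rewrite mulSn; move: (ltn_ord x); lia.
  by rewrite mulnC leq_mul2l ltn_ord orbT.
pose g (j : 'I_d) : 'I_m := Ordinal (hlt j).
have ginj : injective g.
  move=> i j /(congr1 val) /= /divinj h; apply: val_inj; exact: h.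
suff -> : nbhdX B0 x = g @: [set: 'I_d] by rewrite card_imset // cardsT card_ord.
apply/setP => y; rewrite !inE; apply/existsP/imsetP.
  case=> t /andP[/eqP tx /eqP ty].
  have hj : t %/ n < d by rewrite ltn_divLR // [d * n]mulnC.
  exists (Ordinal hj) => //; apply: val_inj => /=.
  by rewrite -ty -tx addnC -divn_eq.
case=> j _ ->.
have ht : x + j * n < n * d.
  apply: leq_trans (_ : j.+1 * n <= _).
    by rewrite mulSn; move: (ltn_ord x); lia.
  by rewrite mulnC leq_mul2l ltn_ord orbT.
exists (Ordinal ht); rewrite /= eqxx andbT.
by rewrite addnC modnMDl modn_small.
Qed.

Lemma B0_in : B0 \in Bset n m d k.
Proof.
rewrite inE; apply/andP; split; apply/forallP => z; apply/eqP.
  exact: B0_X.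
exact: B0_Y.
Qed.
End Exist.

Section Fibers.
Variables (n m d k : nat).

Definition fib (H : hypergraph n) := [set B in Bstar n m d k | phi B == H].

Lemma nbhdY_mem (B : bigraph n m) y : nbhdY B y \in phi B.
Proof. by apply/imsetP; exists y. Qed.

Lemma phi_Hset B : B \in Bstar n m d k -> phi B \in Hset n d k.
Proof.
rewrite !inE => /andP[/andP[/forallP hX /forallP hY] /injectiveP inj].
apply/andP; split.
  by apply/forall_inP => e /imsetP[y _ ->]; apply: hY.
apply/forallP => x.
suff -> : [set e in phi B | x \in e] = nbhdY B @: nbhdX B x.
  by rewrite card_imset //; apply: hX.
apply/setP => e; rewrite !inE; apply/andP/imsetP.
  case=> /imsetP[y _ ->] xy; exists y => //; by rewrite !inE -memBY.
by case=> y; rewrite memB => xy ->; rewrite nbhdY_mem memBY.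
Qed.

Lemma Hset_card (H : hypergraph n) : H \in Hset n d k -> k * #|H| = n * d.
Proof.
rewrite inE => /andP[/forall_inP hE /forallP hX].
have e1 : \sum_(e in H) #|e| = #|H| * k.
  by rewrite -sum_nat_const; apply: eq_bigr => e eH; apply/eqP/hE.
rewrite mulnC -e1.
have e2 : \sum_(x : 'I_n) #|[set e in H | x \in e]| = n * d.
  rewrite (eq_bigr (fun _ => d)); last by move=> x _; apply/eqP/hX.
  by rewrite sum_nat_const card_ord.
rewrite -e2.
under eq_bigr do rewrite card_sum.
rewrite exchange_big /=; apply: eq_bigr => x _.
rewrite card_sum big_mkcond /=; apply: eq_bigr => e _.
by rewrite inE; case: (e \in H); case: (x \in e).
Qed.

Lemma fib_le (H H' : hypergraph n) : 0 < k ->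
  H \in Hset n d k -> H' \in Hset n d k -> #|fib H| <= #|fib H'|.
Proof.
move=> k0 hH hH'.
have cH : #|H| = #|H'|.
  apply/eqP; rewrite -(eqn_pmul2l k0); apply/eqP.
  by rewrite (Hset_card hH) (Hset_card hH').
pose g x := nth set0 (enum H') (index x (enum H)).
have [ginj gin] : {in H &, injective g} /\ {in H, forall x, g x \in H'} :=
  nth_index_inj set0 (eq_leq cH).
pose Ga (B : bigraph n m) : bigraph n m := [set p | p.1 \in g (nbhdY B p.2)].
have GaY B y : nbhdY (Ga B) y = g (nbhdY B y).
  by apply/setP => x; rewrite !inE.
have phiH B : B \in fib H -> forall y, nbhdY B y \in H.
  by rewrite inE => /andP[_ /eqP <-] y; apply: nbhdY_mem.
rewrite -(@card_in_imset _ _ Ga); last first.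
  move=> B1 B2 h1 h2 e; apply/setP => -[x y].
  have := congr1 (fun B => nbhdY B y) e; rewrite /= !GaY.
  move/ginj => /(_ (phiH _ h1 y) (phiH _ h2 y)) e'.
  by rewrite -!memBY e'.
apply: subset_leq_card; apply/subsetP => _ /imsetP[B hB ->].
have hB' := hB; rewrite !inE in hB'.
case/andP: hB' => /andP[/andP[/forallP hX /forallP hY] /injectiveP Binj] /eqP pB.
pose F y := g (nbhdY B y).
have Finj : injective F.
  by move=> y1 y2 /ginj => /(_ (phiH _ hB y1) (phiH _ hB y2)) /Binj.
have FH : F @: [set: 'I_m] = H'.
  apply/eqP; rewrite eqEcard; apply/andP; split.
    by apply/subsetP => _ /imsetP[y _ ->]; apply: gin; apply: phiH.
  by rewrite card_imset // -cH -pB card_imset // cardsT.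
have hH'2 := hH'; rewrite inE in hH'2; case/andP: hH'2 => /forall_inP hE /forallP hXX.
have FinH y : F y \in H' by rewrite -FH; apply/imsetP; exists y.
rewrite !inE; apply/andP; split; first (apply/andP; split; first (apply/andP; split)).
- apply/forallP => x.
  suff -> : nbhdX (Ga B) x = [set y | x \in F y].
    rewrite -(card_imset _ Finj) -(eqP (hXX x)).
    apply/eqP; apply: eq_card => e; rewrite !inE.
    apply/imsetP/andP.
      by case=> y; rewrite inE => xy ->.
    case=> eH xe; have : e \in F @: [set: 'I_m] by rewrite FH.
    by case/imsetP => y _ ey; exists y => //; rewrite inE -ey.
  by apply/setP => y; rewrite !inE.
- by apply/forallP => y; rewrite GaY; apply: hE; apply: FinH.
- by apply/injectiveP => y1 y2; rewrite !GaY; apply: Finj.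
- apply/eqP; rewrite -FH; apply/setP => e; apply/imsetP/imsetP => -[y _ ->];
  by exists y => //; rewrite GaY.
Qed.
End Fibers.


Unset Implicit Arguments.
Local Open Scope ring_scope.

Section TV.
Variables (R : realType) (T : finType) (A : {set T}) (s pi : T -> R).
Hypotheses (s0 : forall x, 0 <= s x) (s1 : \sum_x s x = 1) (pi1 : \sum_x pi x = 1).

Let p := \sum_(x in A) s x.
Let q := \sum_(x in A) pi x.
Let Sa := \sum_(x in A) `|s x - pi x|.
Let Sc := \sum_(x in ~: A) `|s x - pi x|.

Lemma SaSc : Sa + Sc = \sum_x `|s x - pi x|.
Proof.
rewrite /Sa /Sc [RHS](bigID (fun x => x \in A)) /=; congr (_ + _).
by apply: eq_bigl => x; rewrite inE.
Qed.

Lemma qp_a : `|q - p| <= Sa.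
Proof.
rewrite /q /p -sumrB; apply: le_trans (ler_norm_sum _ _ _) _.
by apply: ler_sum => x _; rewrite distrC.
Qed.

Lemma qp_c : `|q - p| <= Sc.
Proof.
have e : q - p = - \sum_(x in ~: A) (pi x - s x).
  have : \sum_x (pi x - s x) = 0 by rewrite sumrB pi1 s1 subrr.
  rewrite (bigID (fun x => x \in A)) /= => /eqP; rewrite addr_eq0 => /eqP e.
  rewrite /q /p -sumrB e; congr (- _); apply: eq_bigl => x; by rewrite inE.
rewrite e normrN; apply: le_trans (ler_norm_sum _ _ _) _.
by apply: ler_sum => x _; rewrite distrC.
Qed.

Lemma qp_close : `|q - p| *+ 2 <= \sum_x `|s x - pi x|.
Proof. by rewrite -SaSc mulr2n lerD // ?qp_a ?qp_c. Qed.

Lemma tv_cond : 0 < p -> 0 < q ->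
  \sum_(x in A) `|s x / p - pi x / q| <= (\sum_x `|s x - pi x|) / q.
Proof.
move=> p0 q0.
have key x : `|s x / p - pi x / q| <= `|s x - pi x| / q + s x * `|q - p| / (p * q).
  have -> : s x / p - pi x / q = (s x - pi x) / q + s x * (q - p) / (p * q).
    by field; rewrite ?gt_eqF ?mulr_gt0.
  apply: le_trans (ler_normD _ _) _.
  rewrite !normrM !normfV (gtr0_norm q0) (gtr0_norm (mulr_gt0 p0 q0)) (ger0_norm (s0 x)).
  by [].
apply: le_trans (ler_sum _ (fun x _ => key x)) _.
rewrite big_split /= -mulr_suml -!mulr_suml -/p -/Sa.
have -> : p * `|q - p| / (p * q) = `|q - p| / q.
  by field; rewrite ?gt_eqF.
rewrite -mulrDl ler_pM2r ?invr_gt0 // -SaSc lerD2l; exact: qp_c.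
Qed.
End TV.

Section Main.
Variables (R : realType) (n d k m : nat).
Hypotheses (hk : (3 <= k)%N) (hm : (k * m)%N = (n * d)%N)
  (hbin : ('C(m, 2) < 'C(n, k))%N).

Let k0 : (0 < k)%N. Proof. exact: leq_trans hk. Qed.
Let kn : (k <= n)%N. Proof. by rewrite -bin_gt0; apply: leq_ltn_trans hbin. Qed.
Let NB0 : (0 < #|Bset n m d k|)%N.
Proof. by apply/card_gt0P; exists (B0 n m d k); apply: B0_in. Qed.
Let BS : Bstar n m d k \subset Bset n m d k.
Proof. by apply/subsetP => B; rewrite inE => /andP[]. Qed.
Let CNK0 : (0 < 'C(n, k))%N. Proof. by rewrite bin_gt0. Qed.

Lemma prob_piB (A : {set bigraph n m}) : A \subset Bset n m d k ->
  prob (piB R n m d k) A = #|A|%:R / #|Bset n m d k|%:R.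
Proof.
move=> hA; rewrite /prob /piB /unif.
rewrite (eq_bigr (fun _ => #|Bset n m d k|%:R^-1)); last first.
  by move=> B hB; rewrite (subsetP hA B hB).
by rewrite sumr_const mulrC mulr_natr.
Qed.

Lemma sum_piB : \sum_B piB R n m d k B = 1.
Proof.
rewrite /piB /unif -big_mkcond sumr_const -[_ *+ _]mulr_natr mulVf //.
by rewrite pnatr_eq0 -lt0n.
Qed.

Lemma part1 : 1 - 'C(m, 2)%:R / 'C(n, k)%:R <= prob (piB R n m d k) (Bstar n m d k).
Proof.
rewrite prob_piB //.
have h := part1_nat n m d k.
rewrite cardsD (setIidPr BS) in h.
have hle : (#|Bstar n m d k| <= #|Bset n m d k|)%N by apply: subset_leq_card.
move: h; rewrite -(ler_nat R) !natrM natrB //.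
set a := #|Bset n m d k|%:R; set b := #|Bstar n m d k|%:R.
set c := 'C(n, k)%:R; set e := 'C(m, 2)%:R => h.
have a0 : 0 < a by rewrite ltr0n.
have c0 : 0 < c by rewrite ltr0n.
rewrite -subr_ge0.
have -> : b / a - (1 - e / c) = (e * a - (a - b) * c) / (a * c).
  by field; rewrite ?gt_eqF.
apply: divr_ge0; first by move: h; set t := (a - b) * c; lra.
by apply: mulr_ge0; apply: ltW.
Qed.

Lemma NS0 : (0 < #|Bstar n m d k|)%N.
Proof.
have := part1; rewrite prob_piB // => h.
rewrite lt0n; apply/negP => /eqP h0; move: h; rewrite h0 /= mul0r => h.
have : 'C(m, 2)%:R / 'C(n, k)%:R < 1 :> R.
  by rewrite ltr_pdivrMr ?ltr0n // mul1r ltr_nat.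
lra.
Qed.

Lemma fib_empty H : H \notin Hset n d k -> fib m d k H = set0.
Proof.
move=> hH; apply/setP => B; rewrite [in RHS]inE.
apply/negP; rewrite inE => /andP[hB /eqP e]; move: hH; rewrite -e.
by rewrite (phi_Hset hB).
Qed.

Lemma NS_eq H : H \in Hset n d k ->
  #|Bstar n m d k| = (#|Hset n d k| * #|fib m d k H|)%N.
Proof.
move=> hH; rewrite (card_fiber _ phi).
rewrite (bigID (fun H' => H' \in Hset n d k)) /=.
rewrite [X in (_ + X)%N]big1 ?addn0; last first.
  by move=> H' /fib_empty; rewrite /fib => ->; rewrite cards0.
rewrite -sum_nat_const; apply: eq_bigr => H' hH'.
by apply/eqP; rewrite eqn_leq !fib_le.
Qed.

Lemma piH_eq H : piH R n d k H =
  (\sum_(B in Bstar n m d k | phi B == H) piB R n m d k B) /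
   prob (piB R n m d k) (Bstar n m d k).
Proof.
rewrite prob_piB //.
have -> : \sum_(B in Bstar n m d k | phi B == H) piB R n m d k B =
     #|fib m d k H|%:R / #|Bset n m d k|%:R.
  rewrite -prob_piB; last first.
    by apply/subsetP => B; rewrite /fib inE => /andP[hB _]; apply: (subsetP BS).
  by rewrite /prob; apply: eq_bigl => B; rewrite /fib [in RHS]inE.
rewrite /piH /unif.
case: (boolP (H \in Hset n d k)) => hH; last first.
  by rewrite fib_empty // cards0 !mul0r.
rewrite (NS_eq H hH).
have := NS0; rewrite (NS_eq H hH) muln_gt0 => /andP[h1 h2].
rewrite natrM; field.
by rewrite !pnatr_eq0 -!lt0n h1 h2 NB0.
Qed.

End Main.

Theorem theorem1p2 (R : realType) (n d k m : nat)
  (hk : (3 <= k)%N) (hm : (k * m)%N = (n * d)%N)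
  (hbin : ('C(m, 2) < 'C(n, k))%N) :
  prob (piB R n m d k) (Bstar n m d k)
    >= 1 - 'C(m, 2)%:R / 'C(n, k)%:R
  /\
  forall (eps c0 tau rho : R) (sigma : bigraph n m -> R),
    is_distr sigma ->
    (forall B, B \notin Bset n m d k -> sigma B = 0) ->
    0 < eps < 1 ->
    dTV sigma (piB R n m d k) <= eps ->
    0 < c0 < 1 - eps ->
    'C(m, 2)%:R <= c0 * 'C(n, k)%:R ->
    0 <= tau -> 0 <= rho ->
    dTV (hs_output d k sigma) (piH R n d k) <= 3 * eps / (2 * (1 - c0))
    /\ (hs_runtime d k sigma tau rho <= ((1 - c0 - eps)^-1 * (tau + rho))%:E)%E.
Proof.
split; first exact: part1.
move=> eps c0 tau rho sigma [s0 s1] supp /andP[e0 e1] hdtv /andP[c00 c01] hc tau0 rho0.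
have P1 := @part1 R n d k m hk hm hbin.
have pi1 := @sum_piB R n d k m hk hm hbin.
set pi := piB R n m d k in P1 pi1 hdtv *.
set A := Bstar n m d k in P1 *.
set p := prob sigma A.
set q := prob pi A in P1 *.
have CNK0 : (0 < 'C(n, k))%N by apply: leq_ltn_trans hbin.
have hq : 1 - c0 <= q.
  have : 'C(m, 2)%:R / 'C(n, k)%:R <= c0 :> R by rewrite ler_pdivrMr ?ltr0n.
  move: P1; set t := _ / _; lra.
set S := \sum_B `|sigma B - pi B|.
have hS : S <= eps *+ 2.
  move: hdtv; rewrite /dTV -/S => h.
  have -> : S = 2 * (2^-1 * S) by field.
  rewrite mulr2n; move: h; set t := 2^-1 * S; lra.
have hqp : `|q - p| <= eps.
  have := @qp_close R _ A sigma pi s1 pi1; rewrite -/p -/q -/S => h.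
  move: h hS; rewrite !mulr2n; set t := `|q - p|; lra.
have hp : 1 - c0 - eps <= p.
  have := ler_norm (q - p); move: hqp hq; set t := `|q - p|; lra.
have p0 : 0 < p by lra.
have q0 : 0 < q by lra.
have S0 : 0 <= S by apply: sumr_ge0 => B _; apply: normr_ge0.
split.
- rewrite /dTV.
  have step : \sum_H `|hs_output d k sigma H - piH R n d k H| <=
              \sum_(B in A) `|sigma B / p - pi B / q|.
    rewrite (partition_big phi xpredT) //=; apply: ler_sum => H _.
    rewrite /hs_output (@piH_eq R n d k m hk hm hbin H) -/p -/q -/A -/pi.
    rewrite !mulr_suml -sumrB; exact: ler_norm_sum.
  have tv := @tv_cond R _ A sigma pi s0 s1 pi1 p0 q0; rewrite -/p -/q -/S in tv.
  have h1 : S / q <= S / (1 - c0).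
    apply: ler_wpM2l => //; rewrite lef_pV2 ?posrE //; lra.
  have h2 : S / (1 - c0) <= 2 * (eps / (1 - c0)).
    rewrite mulrA; apply: ler_wpM2r; first by rewrite invr_ge0; lra.
    by rewrite mulrC mulr_natr.
  have h3 : 0 <= eps / (1 - c0) by apply: divr_ge0; lra.
  have -> : 3 * eps / (2 * (1 - c0)) = 2^-1 * (3 * (eps / (1 - c0))).
    by field; rewrite gt_eqF //; lra.
  apply: ler_wpM2l => //.
  move: step tv h1 h2 h3; set X := \sum_H _; set Y := \sum_(B in A) _.
  set a := S / q; set b := S / (1 - c0); set c := eps / (1 - c0); lra.
- rewrite /hs_runtime -/A -/p.
  have p1 : p <= 1.
    rewrite -s1 [X in _ <= X](bigID (fun B => B \in A)) /= -/p lerDl.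
    by apply: sumr_ge0 => B _.
  apply: lime_le.
    apply: is_cvg_nneseries => i _ _; rewrite lee_fin.
    by apply: mulr_ge0; [lra | apply: exprn_ge0; lra].
  apply: nearW => N; rewrite sumEFin lee_fin.
  rewrite -mulr_sumr [X in _ <= X]mulrC; apply: ler_wpM2l; first lra.
  have geo : p * \sum_(0 <= i < N) (1 - p) ^+ i = 1 - (1 - p) ^+ N.
    rewrite big_mkord; have := subrX1 (1 - p) N.
    have -> : 1 - p - 1 = - p by ring.
    by move=> h; rewrite -[1 - (1 - p) ^+ N]opprB h mulNr opprK.
  have z0 : 0 <= (1 - p) ^+ N by apply: exprn_ge0; lra.
  apply: (@le_trans _ _ p^-1).
    rewrite -(ler_pM2l p0) mulfV ?gt_eqF // geo; lra.
  rewrite lef_pV2 ?posrE //; lra.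
Qed.
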